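(* Let $f(\alpha,\beta)$, $g(\alpha,\beta)$, $h(\alpha)$ be functions that are $2\pi$-periodic in each argument and satisfy $f(\alpha,\beta)=-f(\beta,\alpha)$ and $g(\alpha,\beta)=-g(\beta,\alpha)$. Consider the quad-equation on a rhombus with black vertices $x_0,x_{12}$ and white vertices $x_1,x_2$, where $x_1-x_0=e^{i\alpha}$, $x_2-x_0=e^{i\beta}$ (as points of $\mathbb C$), written in its four ''centered'' forms \begin{align*} (E_0)&\quad f(\alpha,\beta)x_{12}-g(\alpha,\beta)x_0=i\big(h(\beta)x_2-h(\alpha)x_1\big),\\ (E_{12})&\quad f(\alpha+\pi,\beta+\pi)x_0-g(\alpha+\pi,\beta+\pi)x_{12}=i\big(h(\beta+\pi)x_1-h(\alpha+\pi)x_2\big),\\ (E_1)&\quad f(\beta+\pi,\alpha)x_2-g(\beta+\pi,\alpha)x_1=i\big(h(\alpha)x_0-h(\beta+\pi)x_{12}\big),\\ (E_2)&\quad f(\alpha+\pi,\beta)x_1-g(\alpha+\pi,\beta)x_2=i\big(h(\beta)x_0-h(\alpha+\pi)x_{12}\big). \end{align*} The quad-equation is symmetric with respect to centering the quad at any of its four vertices (i.e., for all $\alpha,\beta$ the four linear equations $(E_0),(E_{12}),(E_1),(E_2)$ in $x_0,x_1,x_2,x_{12}$ have proportional coefficient vectors) if and only if there is a constant $c\neq0$ such that for all $\alpha,\beta$ $$h(\alpha)h(\alpha+\pi)=c,\qquad f(\alpha,\beta)f(\alpha+\pi,\beta)=-c,\qquad g(\alpha,\beta)=c^{-1}f(\alpha,\beta)h(\alpha)h(\beta).$$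 Moreover, these conditions together with the skew-symmetry of $f$ imply $f(\alpha,\beta)=f(\alpha+\pi,\beta+\pi)$.
   Context: The quad-equations live on a bipartite quad-graph rhombically embedded in $\mathbb C$ (all faces are rhombi with unit sides), with black and white vertices; edges are directed from black to white and labelled by $\alpha$ where $e^{i\alpha}$ is the edge vector. Opposite edges of a face, directed black-to-white, carry labels differing by $\pi$. *)

(* Defs.v *)
From Stdlib Require Import Reals ZArith.
From Coquelicot Require Import Coquelicot.
Open Scope R_scope.

(* Coefficient vectors of linear equations in (x0, x1, x2, x12). *)
Definition vec4 := (C * C * C * C)%type.

Definition vscale (l : C) (u : vec4) : vec4 :=
  match u with (a, b, c, d) => (l * a, l * b, l * c, l * d)%C end.

Definition proportional (u v : vec4) : Prop :=
  exists l : C, l <> 0%C /\ v = vscale l u.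

Definition vnonzero (u : vec4) : Prop := u <> (RtoC 0, RtoC 0, RtoC 0, RtoC 0).

(* Non-degenerate rhombus: e^{i alpha} and e^{i beta} not collinear. *)
Definition admissible (a b : R) : Prop := forall k : Z, b - a <> IZR k * PI.

Section Eqs.
Variables (f g : R -> R -> C) (h : R -> C).

(* Coefficient vectors, ordered (x0, x1, x2, x12), of the equation written
   as  LHS - RHS = 0. *)
Definition E0 (a b : R) : vec4 :=
  (- g a b, Ci * h a, - (Ci * h b), f a b)%C.
Definition E12 (a b : R) : vec4 :=
  (f (a + PI) (b + PI), - (Ci * h (b + PI)), Ci * h (a + PI),
   - g (a + PI) (b + PI))%C.
Definition E1 (a b : R) : vec4 :=
  (- (Ci * h a), - g (b + PI) a, f (b + PI) a, Ci * h (b + PI))%C.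
Definition E2 (a b : R) : vec4 :=
  (- (Ci * h b), f (a + PI) b, - g (a + PI) b, Ci * h (a + PI))%C.

Definition centering_symmetric : Prop :=
  forall a b : R, admissible a b ->
    vnonzero (E0 a b) /\
    proportional (E0 a b) (E12 a b) /\
    proportional (E0 a b) (E1 a b) /\
    proportional (E0 a b) (E2 a b).

Definition sym_conditions (c : C) : Prop :=
  (forall a : R, (h a * h (a + PI) = c)%C) /\
  (forall a b : R, admissible a b -> (f a b * f (a + PI) b = - c)%C) /\
  (forall a b : R, admissible a b -> g a b = (/ c * f a b * h a * h b)%C).
End Eqs.

(* Main.v *)
Require Import Defs.
From Stdlib Require Import Reals ZArith.
From Coquelicot Require Import Coquelicot.
From Stdlib Require Import Lra Lia Classical.
Open Scope R_scope.

Lemma v4eq (a b c d a' b' c' d' : C) :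
  ((a,b,c,d) : vec4) = (a',b',c',d') -> a = a' /\ b = b' /\ c = c' /\ d = d'.
Proof.
  intros H.
  split; [exact (f_equal (fun v : vec4 => fst (fst (fst v))) H)|].
  split; [exact (f_equal (fun v : vec4 => snd (fst (fst v))) H)|].
  split; [exact (f_equal (fun v : vec4 => snd (fst v)) H)|].
  exact (f_equal (fun v : vec4 => snd v) H).
Qed.

Lemma v4eq' (a b c d a' b' c' d' : C) :
  a = a' -> b = b' -> c = c' -> d = d' -> ((a,b,c,d) : vec4) = (a',b',c',d').
Proof. intros; subst; reflexivity. Qed.

Lemma CiCi : (Ci * Ci = - 1)%C.
Proof. apply injective_projections; simpl; ring. Qed.

Lemma Ci_cancel (x y : C) : (Ci * x = Ci * y)%C -> x = y.
Proof.
  intros H. replace x with (/ Ci * (Ci * x))%C by (field; apply Ci_nz).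
  rewrite H. field. apply Ci_nz.
Qed.

Lemma Cmult_cancel (l x y : C) : l <> 0%C -> (l * x = l * y)%C -> x = y.
Proof.
  intros Hl H. replace x with (/ l * (l * x))%C by (field; auto).
  rewrite H. field. auto.
Qed.

Lemma Cdiv_nz (x y : C) : x <> 0%C -> y <> 0%C -> (x / y)%C <> 0%C.
Proof.
  intros Hx Hy E. apply Hx. replace x with (x / y * y)%C by (field; auto).
  rewrite E. ring.
Qed.

Lemma adm_sym a b : admissible a b -> admissible b a.
Proof.
  intros H k Hk. apply (H (- k)%Z). rewrite opp_IZR. lra.
Qed.

Lemma adm_l a b : admissible a b -> admissible (a + PI) b.
Proof.
  intros H k Hk. apply (H (k + 1)%Z). rewrite plus_IZR. lra.
Qed.

Lemma adm_r a b : admissible a b -> admissible a (b + PI).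
Proof.
  intros H k Hk. apply (H (k - 1)%Z). rewrite minus_IZR. lra.
Qed.

Lemma half_not_int (k : Z) : IZR k <> / 2.
Proof.
  intros H. assert (IZR (2 * k) = IZR 1) by (rewrite mult_IZR, H; simpl; lra).
  apply eq_IZR in H0. lia.
Qed.

Section Main.
Variables (f g : R -> R -> C) (h : R -> C).

Lemma fwd : centering_symmetric f g h -> forall a b, admissible a b ->
  f a b <> 0%C /\ g a b <> 0%C /\ h a <> 0%C /\ h (a + PI) <> 0%C /\
  (h a * h (a + PI) = h b * h (b + PI))%C /\
  (f a b * f (a + PI) b = - (h a * h (a + PI)))%C /\
  (g a b * h (a + PI) = f a b * h b)%C.
Proof.
  intros HS a b Hab.
  destruct (HS a b Hab) as [Hnz [[l [Hl H12]] [[l1 [Hl1 H1]] [l2 [Hl2 H2]]]]].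
  unfold E0, E12, E1, E2, vscale in *.
  apply v4eq in H12. apply v4eq in H1. apply v4eq in H2.
  destruct H12 as [_ [H12b [H12c _]]].
  destruct H1 as [H1a [_ [_ H1d]]].
  destruct H2 as [H2a [H2b [_ H2d]]].
  assert (EhB : h (b + PI) = (- l * h a)%C).
  { apply Ci_cancel. replace (Ci * h (b + PI))%C with (- (- (Ci * h (b+PI))))%C by ring.
    rewrite H12b. ring. }
  assert (EhA : h (a + PI) = (- l * h b)%C).
  { apply Ci_cancel. rewrite H12c. ring. }
  assert (Eha : (Ci * h a = l1 * g a b)%C).
  { replace (Ci * h a)%C with (- (- (Ci * h a)))%C by ring. rewrite H1a. ring. }
  assert (Ehb : (Ci * h b = l2 * g a b)%C).
  { replace (Ci * h b)%C with (- (- (Ci * h b)))%C by ring. rewrite H2a. ring. }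
  assert (Ef : f a b = (- l * g a b)%C).
  { apply (Cmult_cancel l1); auto. rewrite <- H1d, EhB.
    replace (Ci * (- l * h a))%C with (- l * (Ci * h a))%C by ring. rewrite Eha. ring. }
  assert (Hg : g a b <> 0%C).
  { intros Hg0. apply Hnz. rewrite Hg0 in Ef, Eha, Ehb.
    rewrite Cmult_0_r in Eha, Ehb. rewrite Ef.
    assert (h a = 0%C). { apply Ci_cancel. rewrite Eha. ring. }
    assert (h b = 0%C). { apply Ci_cancel. rewrite Ehb. ring. }
    rewrite H, H0, Hg0. apply v4eq'; ring. }
  assert (Hfn : f a b <> 0%C).
  { rewrite Ef. apply Cmult_neq_0; auto. intros E. apply Hl.
    replace l with (- (- l))%C by ring. rewrite E. ring. }
  assert (Hha : h a <> 0%C).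
  { intros E. rewrite E, Cmult_0_r in Eha. symmetry in Eha.
    revert Eha. apply Cmult_neq_0; auto. }
  assert (HhA : h (a + PI) <> 0%C).
  { intros E. rewrite E, Cmult_0_r in H2d. symmetry in H2d.
    revert H2d. apply Cmult_neq_0; auto. }
  repeat split; auto.
  - rewrite EhA, EhB. ring.
  - rewrite H2b. replace (f a b * (l2 * (Ci * h a)))%C with ((l2 * f a b) * (Ci * h a))%C by ring.
    rewrite <- H2d. replace (- (h a * h (a + PI)))%C with (Ci * Ci * (h a * h (a+PI)))%C
      by (rewrite CiCi; ring). ring.
  - apply Ci_cancel.
    replace (Ci * (g a b * h (a + PI)))%C with (g a b * (Ci * h (a + PI)))%C by ring.
    rewrite H2d.
    replace (Ci * (f a b * h b))%C with (f a b * (Ci * h b))%C by ring.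
    rewrite Ehb. ring.
Qed.


Lemma bwd (Hfskew : forall a b, f a b = (- f b a)%C) (c : C) :
  c <> 0%C -> sym_conditions f g h c -> forall a b, admissible a b ->
  f a b <> 0%C /\ h a <> 0%C /\ h b <> 0%C /\
  h (a + PI) = (c / h a)%C /\ h (b + PI) = (c / h b)%C /\
  f (a + PI) b = (- c / f a b)%C /\ f (b + PI) a = (c / f a b)%C /\
  f (a + PI) (b + PI) = f a b.
Proof.
  intros Hc [H1 [H2 H3]] a b Hab.
  assert (Hhn : forall x, h x <> 0%C).
  { intros x E. apply Hc. rewrite <- (H1 x), E. ring. }
  assert (HhA : forall x, h (x + PI) = (c / h x)%C).
  { intros x. rewrite <- (H1 x). field. auto. }
  assert (Hfn : forall x y, admissible x y -> f x y <> 0%C).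
  { intros x y Hxy E. apply Hc. specialize (H2 x y Hxy). rewrite E in H2.
    replace c with (- (- c))%C by ring. rewrite <- H2. ring. }
  assert (HfA : forall x y, admissible x y -> f (x + PI) y = (- c / f x y)%C).
  { intros x y Hxy. rewrite <- (H2 x y Hxy). field. auto. }
  assert (HfB : f (b + PI) a = (c / f a b)%C).
  { rewrite (HfA b a (adm_sym _ _ Hab)), (Hfskew a b). field.
    intros E. apply (Hfn b a (adm_sym _ _ Hab)). replace (f b a) with (- (- f b a))%C by ring.
    rewrite E. ring. }
  repeat split; auto.
  rewrite (HfA a (b + PI) (adm_r _ _ Hab)), (Hfskew a (b + PI)), HfB.
  field. split; auto.
Qed.


Lemma fwd_const : centering_symmetric f g h -> forall a,
  (h a * h (a + PI) = h (PI/2) * h (PI/2 + PI))%C.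
Proof.
  intros HS a.
  assert (Hpi := PI_RGT_0).
  assert (A0 : admissible 0 (PI/2)).
  { intros k Hk. apply (half_not_int k).
    apply (Rmult_eq_reg_r PI); [|lra]. lra. }
  destruct (classic (admissible (PI/2) a)) as [Ha|Ha].
  - destruct (fwd HS _ _ Ha) as [_ [_ [_ [_ [E _]]]]]. symmetry. exact E.
  - unfold admissible in Ha. apply not_all_ex_not in Ha. destruct Ha as [k Hk].
    apply NNPP in Hk.
    assert (A1 : admissible 0 a).
    { intros j Hj. apply (half_not_int (j - k)). rewrite minus_IZR.
      apply (Rmult_eq_reg_r PI); [|lra]. lra. }
    destruct (fwd HS _ _ A0) as [_ [_ [_ [_ [E0' _]]]]].
    destruct (fwd HS _ _ A1) as [_ [_ [_ [_ [E1' _]]]]].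
    rewrite <- E1', E0'. reflexivity.
Qed.

End Main.

Theorem lemma1 (f g : R -> R -> C) (h : R -> C)
  (Hf1 : forall a b, f (a + 2 * PI) b = f a b)
  (Hf2 : forall a b, f a (b + 2 * PI) = f a b)
  (Hg1 : forall a b, g (a + 2 * PI) b = g a b)
  (Hg2 : forall a b, g a (b + 2 * PI) = g a b)
  (Hh : forall a, h (a + 2 * PI) = h a)
  (Hfskew : forall a b, f a b = (- f b a)%C)
  (Hgskew : forall a b, g a b = (- g b a)%C) :
  (centering_symmetric f g h <->
     exists c : C, c <> 0%C /\ sym_conditions f g h c) /\
  (forall c : C, c <> 0%C -> sym_conditions f g h c ->
     forall a b, admissible a b -> f a b = f (a + PI) (b + PI)).
Proof.
  split; [split|].
  - intros HS. exists (h (PI/2)%R * h (PI/2 + PI)%R)%C.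
    assert (Hpi := PI_RGT_0).
    assert (A0 : admissible 0 (PI/2)).
    { intros k Hk. apply (half_not_int k).
      apply (Rmult_eq_reg_r PI); [|lra]. lra. }
    split.
    { destruct (fwd f g h HS _ _ A0) as [_ [_ [Hh0 [HhA _]]]].
      rewrite <- (fwd_const f g h HS 0). apply Cmult_neq_0; auto. }
    split; [|split].
    + intros a. apply (fwd_const f g h HS).
    + intros a b Hab. rewrite <- (fwd_const f g h HS a).
      destruct (fwd f g h HS _ _ Hab) as [_ [_ [_ [_ [_ [E _]]]]]]. exact E.
    + intros a b Hab. rewrite <- (fwd_const f g h HS a).
      destruct (fwd f g h HS _ _ Hab) as [_ [_ [Hha [HhA [_ [_ E]]]]]].
      replace (g a b) with (g a b * h (a + PI)%R / h (a + PI)%R)%C by (field; auto).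
      rewrite E. field. split; auto.
  - intros [c [Hc HC]] a b Hab.
    destruct (bwd f g h Hfskew c Hc HC a b Hab)
      as [Hfn [Hha [Hhb [EhA [EhB [EfA [EfB EfAB]]]]]]].
    destruct HC as [_ [_ H3]].
    assert (G0 := H3 a b Hab).
    assert (GA := H3 (a + PI) b (adm_l _ _ Hab)).
    assert (GB := H3 (b + PI) a (adm_l _ _ (adm_sym _ _ Hab))).
    assert (GAB := H3 (a + PI) (b + PI) (adm_l _ _ (adm_r _ _ Hab))).
    unfold E0, E12, Defs.E1, E2, vscale.
    rewrite G0, GA, GB, GAB, EfA, EfB, EfAB, EhA, EhB.
    split; [|split; [|split]].
    + intros E. apply v4eq in E. destruct E as [_ [E _]].
      apply (Cmult_neq_0 Ci (h a) Ci_nz Hha). exact E.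
    + exists (- c / (h a * h b))%C. split.
      { intros E. apply Hc. replace c with (- (- c / (h a * h b)) * (h a * h b))%C
          by (field; auto). rewrite E. ring. }
      apply v4eq'; field [CiCi]; auto.
    + exists (Ci * c / (f a b * h b))%C. split.
      { apply Cdiv_nz; [apply Cmult_neq_0; auto; apply Ci_nz|apply Cmult_neq_0; auto]. }
      apply v4eq'; field [CiCi]; auto.
    + exists (Ci * c / (f a b * h a))%C. split.
      { apply Cdiv_nz; [apply Cmult_neq_0; auto; apply Ci_nz|apply Cmult_neq_0; auto]. }
      apply v4eq'; field [CiCi]; auto.
  - intros c Hc HC a b Hab.
    destruct (bwd f g h Hfskew c Hc HC a b Hab) as [_ [_ [_ [_ [_ [_ [_ E]]]]]]].
    symmetry; exact E.
Qed.
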